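(* Let $\bar t>0$, $I=(0,\bar t)$, let $\gamma_1,\gamma_2\in\mathrm{Lip}(I)$ (extended continuously to $\bar I$) with $\gamma_1<0<\gamma_2$ on $I$, $\gamma_1(0)=\gamma_1(\bar t)=\gamma_2(0)=\gamma_2(\bar t)=0$, $\gamma_1$ convex and $\gamma_2$ concave, and let $D=\{(y,t)\in\mathbb W: t\in I,\ \gamma_1(t)<y<\gamma_2(t)\}$. Let $\phi\in C(\partial D)$ with $\phi_1,\phi_2\in\mathrm{Lip}(I)$, and assume $\zeta<(\sqrt{721}-25)/48$. Let $u\in\mathrm{Lip}(D)$ be a function with $u=\phi$ on $\partial D$ and $S_u=R_\phi$. Then there exist an open set $D^r\subset\mathbb W$ and $u^r\in\mathrm{Lip}_{loc}(D^r)$ such that $S_u=S^r_{u^r}$.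
   Context: $\mathbb H$ is $\mathbb R^3$ with product $(x,y,t)\cdot(\xi,\eta,\tau)=(x+\xi,y+\eta,t+\tau+2(y\xi-x\eta))$; $X=\partial_x+2y\partial_t$, $Y=\partial_y-2x\partial_t$, $H_p=\mathrm{span}\{X(p),Y(p)\}$. $\mathbb W=\{x=0\}$ with coordinates $(y,t)$. Left intrinsic graph of $u:D\to\mathbb R$: $S_u=\{(u(y,t),y,t+2yu(y,t)):(y,t)\in D\}$. Right intrinsic graph of $v:D^r\to\mathbb R$: $S^r_v=\{(v(y,t),y,t-2yv(y,t)):(y,t)\in D^r\}$. Set $\phi_i(s)=\phi(\gamma_i(s),s)$, $\|\gamma\|_\infty=\max_i\|\gamma_i\|_\infty$, $\mathrm{Lip}(\gamma)=\max_i\mathrm{Lip}(\gamma_i)$, $\|\phi\|_\infty=\max_i\|\phi_i\|_\infty$, $\mathrm{Lip}(\phi)=\max_i\mathrm{Lip}(\phi_i)$, $\zeta=4(\|\gamma\|_\infty+\mathrm{Lip}(\gamma))(\|\phi\|_\infty+\mathrm{Lip}(\phi))$. Let $p_i(s)=(\phi_i(s),\gamma_i(s),s+2\gamma_i(s)\phi_i(s))$, $s\in\bar I$. When $\zeta<1$, for each $s\in\bar I$ there is a unique $\lambda(s)\in\bar I$ with $p_2(\lambda(s))-p_1(s)\in H_{p_1(s)}$ (equivalently $\lambda(s)-s+2(\gamma_2(\lambda(s))-\gamma_1(s))(\phi_2(\lambda(s))+\phi_1(s))=0$). Then $\rho(h,s)=(1-h)p_1(s)+h\,p_2(\lambda(s))$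 for $(h,s)\in Q=(0,1)\times I$, and $R_\phi:=\rho(Q)$ is the horizontally ruled surface spanned by $\phi$. *)

(* Defs.v *)
From Stdlib Require Import Reals.
Open Scope R_scope.

(* Points of W = {x = 0} are pairs (y,t), written as two real arguments.
   Points of the Heisenberg group H = R^3 are triples (x,y,t). *)

Definition dist2 (y t y' t' : R) : R := sqrt ((y - y')^2 + (t - t')^2).

Definition inI (tb s : R) : Prop := 0 < s < tb.
Definition inIbar (tb s : R) : Prop := 0 <= s <= tb.

Definition lip_on_I (tb : R) (f : R -> R) : Prop :=
  exists L, forall s s', inI tb s -> inI tb s' -> Rabs (f s - f s') <= L * Rabs (s - s').

(* f is continuous on the closed interval [0, tb] (continuous extension to bar I) *)
Definition cont_on_Ibar (tb : R) (f : R -> R) : Prop :=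
  forall s, inIbar tb s -> forall eps, 0 < eps -> exists del, 0 < del /\
    forall s', inIbar tb s' -> Rabs (s' - s) < del -> Rabs (f s' - f s) < eps.

Definition convex_on_Ibar (tb : R) (f : R -> R) : Prop :=
  forall a b th, inIbar tb a -> inIbar tb b -> 0 <= th <= 1 ->
    f (th * a + (1 - th) * b) <= th * f a + (1 - th) * f b.

Definition concave_on_Ibar (tb : R) (f : R -> R) : Prop :=
  forall a b th, inIbar tb a -> inIbar tb b -> 0 <= th <= 1 ->
    th * f a + (1 - th) * f b <= f (th * a + (1 - th) * b).

Definition Dom (tb : R) (g1 g2 : R -> R) (y t : R) : Prop :=
  inI tb t /\ g1 t < y < g2 t.

Definition in_closure (A : R -> R -> Prop) (y t : R) : Prop :=
  forall eps, 0 < eps -> exists y' t', A y' t' /\ dist2 y t y' t' < eps.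
Definition in_interior (A : R -> R -> Prop) (y t : R) : Prop :=
  exists eps, 0 < eps /\ forall y' t', dist2 y t y' t' < eps -> A y' t'.
Definition in_boundary (A : R -> R -> Prop) (y t : R) : Prop :=
  in_closure A y t /\ ~ in_interior A y t.
Definition open_W (A : R -> R -> Prop) : Prop :=
  forall y t, A y t -> in_interior A y t.

Definition cont_on_boundary (A : R -> R -> Prop) (phi : R -> R -> R) : Prop :=
  forall y t, in_boundary A y t -> forall eps, 0 < eps -> exists del, 0 < del /\
    forall y' t', in_boundary A y' t' -> dist2 y t y' t' < del ->
      Rabs (phi y' t' - phi y t) < eps.

Definition lip_on (A : R -> R -> Prop) (u : R -> R -> R) : Prop :=
  exists L, forall y t y' t', A y t -> A y' t' ->
    Rabs (u y t - u y' t') <= L * dist2 y t y' t'.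

Definition lip_loc (A : R -> R -> Prop) (u : R -> R -> R) : Prop :=
  forall y0 t0, A y0 t0 -> exists r L, 0 < r /\
    forall y t y' t', A y t -> A y' t' -> dist2 y0 t0 y t < r -> dist2 y0 t0 y' t' < r ->
      Rabs (u y t - u y' t') <= L * dist2 y t y' t'.

(* "u = phi on the boundary of A": the (continuous) extension of u to the
   closure of A agrees with phi on the boundary, i.e. u(q) -> phi(p) as q -> p, q in A. *)
Definition boundary_values (A : R -> R -> Prop) (u phi : R -> R -> R) : Prop :=
  forall y t, in_boundary A y t -> forall eps, 0 < eps -> exists del, 0 < del /\
    forall y' t', A y' t' -> dist2 y t y' t' < del -> Rabs (u y' t' - phi y t) < eps.

Definition is_supnorm_I (tb : R) (f : R -> R) (m : R) : Prop :=
  is_lub (fun z => exists s, inI tb s /\ z = Rabs (f s)) m.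
Definition is_lipconst_I (tb : R) (f : R -> R) (L : R) : Prop :=
  is_lub (fun z => exists s s', inI tb s /\ inI tb s' /\ s <> s' /\
                     z = Rabs (f s - f s') / Rabs (s - s')) L.

Definition zeta_lt (tb : R) (g1 g2 : R -> R) (phi : R -> R -> R) (c : R) : Prop :=
  exists ng1 ng2 lg1 lg2 np1 np2 lp1 lp2 : R,
    is_supnorm_I tb g1 ng1 /\ is_supnorm_I tb g2 ng2 /\
    is_lipconst_I tb g1 lg1 /\ is_lipconst_I tb g2 lg2 /\
    is_supnorm_I tb (fun s => phi (g1 s) s) np1 /\
    is_supnorm_I tb (fun s => phi (g2 s) s) np2 /\
    is_lipconst_I tb (fun s => phi (g1 s) s) lp1 /\
    is_lipconst_I tb (fun s => phi (g2 s) s) lp2 /\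
    4 * (Rmax ng1 ng2 + Rmax lg1 lg2) * (Rmax np1 np2 + Rmax lp1 lp2) < c.

Definition pt3 : Type := (R * R * R)%type.

Definition S_left (A : R -> R -> Prop) (u : R -> R -> R) (q : pt3) : Prop :=
  exists y t, A y t /\ q = (u y t, y, t + 2 * y * u y t).

Definition S_right (A : R -> R -> Prop) (v : R -> R -> R) (q : pt3) : Prop :=
  exists y t, A y t /\ q = (v y t, y, t - 2 * y * v y t).

(* H_p = span{X(p), Y(p)}, X = (1,0,2y), Y = (0,1,-2x) at p = (x,y,t):
   w = (a,b,c) in H_p iff c = 2 y a - 2 x b. *)
Definition in_Hp (p w : pt3) : Prop :=
  let '(x, y, _) := p in let '(a, b, c) := w in c = 2 * y * a - 2 * x * b.

Definition sub3 (p q : pt3) : pt3 :=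
  let '(x, y, t) := p in let '(x', y', t') := q in (x - x', y - y', t - t').

Definition comb3 (h : R) (p q : pt3) : pt3 :=
  let '(x, y, t) := p in let '(x', y', t') := q in
  ((1 - h) * x + h * x', (1 - h) * y + h * y', (1 - h) * t + h * t').

Definition p_i (g : R -> R) (phi : R -> R -> R) (s : R) : pt3 :=
  (phi (g s) s, g s, s + 2 * g s * phi (g s) s).

(* lambda(s) is characterized as the (unique, when zeta < 1) point of bar I
   with p_2(lambda(s)) - p_1(s) in H_{p_1(s)}. *)
Definition is_lambda (tb : R) (g1 g2 : R -> R) (phi : R -> R -> R) (s l : R) : Prop :=
  inIbar tb l /\ in_Hp (p_i g1 phi s) (sub3 (p_i g2 phi l) (p_i g1 phi s)).

Definition R_phi (tb : R) (g1 g2 : R -> R) (phi : R -> R -> R) (q : pt3) : Prop :=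
  exists h s l, 0 < h < 1 /\ inI tb s /\ is_lambda tb g1 g2 phi s l /\
    q = comb3 h (p_i g1 phi s) (p_i g2 phi l).

(* Main.v *)
Require Import Defs.
From Stdlib Require Import Reals.
From Stdlib Require Import Lra Psatz ClassicalEpsilon.
Open Scope R_scope.


Lemma dist2_ge_y y t y' t' : Rabs (y - y') <= dist2 y t y' t'.
Proof.
  unfold dist2. rewrite <- sqrt_Rsqr_abs. apply sqrt_le_1_alt.
  unfold Rsqr. pose proof (pow2_ge_0 (t-t')). simpl. lra.
Qed.

Lemma dist2_ge_t y t y' t' : Rabs (t - t') <= dist2 y t y' t'.
Proof.
  unfold dist2. rewrite <- sqrt_Rsqr_abs. apply sqrt_le_1_alt.
  unfold Rsqr. pose proof (pow2_ge_0 (y-y')). simpl. lra.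
Qed.

Lemma dist2_le y t y' t' : dist2 y t y' t' <= Rabs (y - y') + Rabs (t - t').
Proof.
  unfold dist2.
  pose proof (Rabs_pos (y-y')); pose proof (Rabs_pos (t-t')).
  rewrite <- (sqrt_Rsqr (Rabs (y - y') + Rabs (t - t'))) by lra.
  apply sqrt_le_1_alt.
  assert ((y-y')^2 = Rabs (y-y') * Rabs (y-y')) by (rewrite <- pow2_abs; ring).
  assert ((t-t')^2 = Rabs (t-t') * Rabs (t-t')) by (rewrite <- pow2_abs; ring).
  unfold Rsqr. nra.
Qed.

Lemma dist2_same_t y y' t : dist2 y t y' t = Rabs (y - y').
Proof.
  unfold dist2. replace ((y-y')^2 + (t-t)^2) with (Rsqr (y-y')) by (unfold Rsqr; ring).
  apply sqrt_Rsqr_abs.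
Qed.

Lemma dist2_nonneg y t y' t' : 0 <= dist2 y t y' t'.
Proof. unfold dist2. apply sqrt_pos. Qed.

Lemma sup_bound tb f n s : is_supnorm_I tb f n -> inI tb s -> Rabs (f s) <= n.
Proof. intros [H _] Hs. apply H. exists s. auto. Qed.

Lemma sup_nonneg tb f n : 0 < tb -> is_supnorm_I tb f n -> 0 <= n.
Proof.
  intros Htb H. apply Rle_trans with (Rabs (f (tb/2))). apply Rabs_pos.
  apply (sup_bound tb); auto. unfold inI; lra.
Qed.

Lemma lip_bound tb f L s s' : is_lipconst_I tb f L -> inI tb s -> inI tb s' ->
  Rabs (f s - f s') <= L * Rabs (s - s').
Proof.
  intros [H _] Hs Hs'. destruct (Req_dec s s') as [E|E].
  - subst. replace (f s' - f s') with 0 by ring. replace (s'-s') with 0 by ring.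
    rewrite Rabs_R0. lra.
  - assert (Hp: 0 < Rabs (s - s')) by (apply Rabs_pos_lt; lra).
    assert (Hr: Rabs (f s - f s') / Rabs (s - s') <= L) by (apply H; exists s, s'; auto).
    apply (Rmult_le_compat_r (Rabs (s-s'))) in Hr; [|lra].
    unfold Rdiv in Hr. rewrite Rmult_assoc, Rinv_l in Hr; lra.
Qed.

Lemma lip_nonneg tb f L : 0 < tb -> is_lipconst_I tb f L -> 0 <= L.
Proof.
  intros Htb [H _]. apply Rle_trans with (Rabs (f (tb/3) - f (2*tb/3)) / Rabs (tb/3 - 2*tb/3)).
  - apply Rmult_le_pos. apply Rabs_pos. left. apply Rinv_0_lt_compat. apply Rabs_pos_lt. lra.
  - apply H. exists (tb/3), (2*tb/3). unfold inI. repeat split; lra.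
Qed.

Lemma approx_I tb a d : 0 < tb -> inIbar tb a -> 0 < d -> exists a', inI tb a' /\ Rabs (a' - a) < d.
Proof.
  intros Htb [Ha1 Ha2] Hd. set (th := Rmin 1 (d / (2*tb))).
  assert (Hth1: 0 < th). { unfold th. apply Rmin_glb_lt. lra. apply Rdiv_lt_0_compat; lra. }
  assert (Hth2: th <= 1) by apply Rmin_l.
  assert (Hth3: th * (2*tb) <= d). { unfold th. 
    apply Rle_trans with (d / (2*tb) * (2*tb)). apply Rmult_le_compat_r. lra. apply Rmin_r.
    unfold Rdiv. rewrite Rmult_assoc, Rinv_l; lra. }
  exists (a + th * (tb/2 - a)). split. unfold inI. split; nra.
  replace (a + th * (tb / 2 - a) - a) with (th * (tb/2 - a)) by ring.
  rewrite Rabs_mult, Rabs_pos_eq by lra.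
  assert (Rabs (tb/2 - a) <= tb) by (apply Rabs_le; lra). nra.
Qed.

Lemma dist2_sym y t y' t' : dist2 y t y' t' = dist2 y' t' y t.
Proof. unfold dist2. f_equal. ring. Qed.


Lemma tri3 x y z : Rabs (x - y + z) <= Rabs x + Rabs y + Rabs z.
Proof.
  pose proof (Rabs_triang (x - y) z). pose proof (Rabs_triang x (-y)).
  rewrite Rabs_Ropp in H0. unfold Rminus in *. lra.
Qed.

Lemma near_I tb f a e : 0 < tb -> cont_on_Ibar tb f -> inIbar tb a -> 0 < e ->
  exists a', inI tb a' /\ Rabs (a' - a) < e /\ Rabs (f a' - f a) < e.
Proof.
  intros Htb Hc Ha He. destruct (Hc a Ha e He) as [d [Hd Hd']].
  destruct (approx_I tb a (Rmin d e) Htb Ha) as [a' [Ha' Hd2]].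
  apply Rmin_glb_lt; lra.
  exists a'. split; auto. split.
  - apply Rlt_le_trans with (Rmin d e); auto. apply Rmin_r.
  - apply Hd'. destruct Ha'; unfold inIbar; lra. apply Rlt_le_trans with (Rmin d e); auto. apply Rmin_l.
Qed.

Lemma ext_lip tb f L a b : 0 < tb -> cont_on_Ibar tb f ->
  (forall s s', inI tb s -> inI tb s' -> Rabs (f s - f s') <= L * Rabs (s - s')) -> 0 <= L ->
  inIbar tb a -> inIbar tb b -> Rabs (f a - f b) <= L * Rabs (a - b).
Proof.
  intros Htb Hc HL HL0 Ha Hb. apply Rle_plus_epsilon. intros eps Heps.
  set (e := eps / (2 + 2*L)).
  assert (He: 0 < e) by (unfold e; apply Rdiv_lt_0_compat; lra).
  assert (He2: e * (2 + 2*L) = eps) by (unfold e; field; lra).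
  destruct (near_I tb f a e Htb Hc Ha He) as [a' [Ha' [H1 H2]]].
  destruct (near_I tb f b e Htb Hc Hb He) as [b' [Hb' [H3 H4]]].
  pose proof (HL a' b' Ha' Hb').
  assert (Rabs (a' - b') <= Rabs (a - b) + 2*e).
  { replace (a'-b') with ((a-b) + (a'-a) - (b'-b)) by ring.
    pose proof (Rabs_triang (a-b + (a'-a)) (-(b'-b))). rewrite Rabs_Ropp in H0.
    pose proof (Rabs_triang (a-b) (a'-a)). unfold Rminus at 1. lra. }
  replace (f a - f b) with ((f a' - f b') - (f a' - f a) + (f b' - f b)) by ring.
  pose proof (tri3 (f a' - f b') (f a' - f a) (f b' - f b)).
  assert (L * Rabs (a' - b') <= L * (Rabs (a - b) + 2*e)) by (apply Rmult_le_compat_l; lra).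
  lra.
Qed.

Lemma ext_sup tb f n a : 0 < tb -> cont_on_Ibar tb f ->
  (forall s, inI tb s -> Rabs (f s) <= n) -> inIbar tb a -> Rabs (f a) <= n.
Proof.
  intros Htb Hc Hn Ha. apply Rle_plus_epsilon. intros eps Heps.
  destruct (near_I tb f a eps Htb Hc Ha Heps) as [a' [Ha' [H1 H2]]].
  pose proof (Hn a' Ha').
  replace (f a) with (f a' - (f a' - f a)) by ring.
  pose proof (Rabs_triang (f a') (- (f a' - f a))). rewrite Rabs_Ropp in H0. unfold Rminus at 1. lra.
Qed.


Lemma in_bnd tb g1 g2 s : 0 < tb -> cont_on_Ibar tb g2 ->
  (forall s, inI tb s -> g1 s < 0 < g2 s) -> inIbar tb s ->
  in_boundary (Dom tb g1 g2) (g2 s) s.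
Proof.
  intros Htb Hc Hg Hs. split.
  - intros eps Heps.
    destruct (near_I tb g2 s (eps/3) Htb Hc Hs) as [s' [Hs' [H1 H2]]]. lra.
    destruct (Hg s' Hs') as [G1 G2].
    set (eta := Rmin (g2 s' / 2) (eps / 4)).
    assert (Heta: 0 < eta) by (unfold eta; apply Rmin_glb_lt; lra).
    assert (Heta1: eta <= g2 s' / 2) by apply Rmin_l.
    assert (Heta2: eta <= eps / 4) by apply Rmin_r.
    exists (g2 s' - eta), s'. split.
    + split; auto. lra.
    + eapply Rle_lt_trans. apply dist2_le.
      replace (g2 s - (g2 s' - eta)) with (-(g2 s' - g2 s) + eta) by ring.
      pose proof (Rabs_triang (-(g2 s' - g2 s)) eta). rewrite Rabs_Ropp in H.
      rewrite (Rabs_pos_eq eta) in H by lra. rewrite Rabs_minus_sym. lra.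
  - intros [e [He H]]. 
    assert (HD: Dom tb g1 g2 (g2 s + e/2) s).
    { apply H. rewrite dist2_same_t. replace (g2 s - (g2 s + e/2)) with (-(e/2)) by ring.
      rewrite Rabs_Ropp, Rabs_pos_eq; lra. }
    destruct HD as [_ [_ HH]]. lra.
Qed.

Lemma phi2_cont tb g1 g2 phi : 0 < tb -> cont_on_Ibar tb g2 ->
  (forall s, inI tb s -> g1 s < 0 < g2 s) -> cont_on_boundary (Dom tb g1 g2) phi ->
  cont_on_Ibar tb (fun s => phi (g2 s) s).
Proof.
  intros Htb Hc Hg Hb s Hs eps Heps.
  destruct (Hb (g2 s) s (in_bnd tb g1 g2 s Htb Hc Hg Hs) eps Heps) as [del [Hdel Hd]].
  destruct (Hc s Hs (del/2)) as [d2 [Hd2 Hd2']]. lra.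
  exists (Rmin (del/2) d2). split. apply Rmin_glb_lt; lra.
  intros s' Hs' Hss'. apply Hd. apply in_bnd; auto.
  eapply Rle_lt_trans. apply dist2_le.
  assert (Rabs (s' - s) < del/2) by (eapply Rlt_le_trans; [apply Hss'|apply Rmin_l]).
  assert (Rabs (g2 s' - g2 s) < del/2) by (apply Hd2'; auto; eapply Rlt_le_trans; [apply Hss'|apply Rmin_r]).
  rewrite (Rabs_minus_sym (g2 s)), (Rabs_minus_sym s). lra.
Qed.

Lemma Dom_open tb g1 g2 y t : cont_on_Ibar tb g1 -> cont_on_Ibar tb g2 ->
  Dom tb g1 g2 y t -> exists rho, 0 < rho /\ forall y' t', dist2 y t y' t' < rho -> Dom tb g1 g2 y' t'.
Proof.
  intros Hc1 Hc2 [[Ht1 Ht2] [Hy1 Hy2]].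
  assert (HI: inIbar tb t) by (unfold inIbar; lra).
  destruct (Hc1 t HI ((y - g1 t)/2)) as [d1 [Hd1 Hd1']]. lra.
  destruct (Hc2 t HI ((g2 t - y)/2)) as [d2 [Hd2 Hd2']]. lra.
  set (rho := Rmin (Rmin (Rmin t (tb - t)) (Rmin d1 d2)) (Rmin ((y - g1 t)/2) ((g2 t - y)/2))).
  assert (R1: rho <= t) by (unfold rho; repeat (eapply Rle_trans; [apply Rmin_l|]); lra).
  assert (R2: rho <= tb - t) by (unfold rho; eapply Rle_trans; [apply Rmin_l|]; eapply Rle_trans; [apply Rmin_l|]; apply Rmin_r).
  assert (R3: rho <= d1) by (unfold rho; eapply Rle_trans; [apply Rmin_l|]; eapply Rle_trans; [apply Rmin_r|]; apply Rmin_l).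
  assert (R4: rho <= d2) by (unfold rho; eapply Rle_trans; [apply Rmin_l|]; eapply Rle_trans; [apply Rmin_r|]; apply Rmin_r).
  assert (R5: rho <= (y - g1 t)/2) by (unfold rho; eapply Rle_trans; [apply Rmin_r|]; apply Rmin_l).
  assert (R6: rho <= (g2 t - y)/2) by (unfold rho; eapply Rle_trans; [apply Rmin_r|]; apply Rmin_r).
  assert (Hr: 0 < rho).
  { unfold rho. repeat apply Rmin_glb_lt; lra. }
  exists rho. split; auto. intros y' t' Hd.
  pose proof (dist2_ge_y y t y' t'). pose proof (dist2_ge_t y t y' t').
  assert (Rabs (y - y') < rho) by lra. assert (Rabs (t - t') < rho) by lra.
  apply Rabs_def2 in H1. apply Rabs_def2 in H2. destruct H1, H2.
  assert (Ht': inIbar tb t') by (unfold inIbar; lra).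
  assert (Rabs (g1 t' - g1 t) < (y - g1 t)/2) by (apply Hd1'; auto; rewrite Rabs_minus_sym; lra).
  assert (Rabs (g2 t' - g2 t) < (g2 t - y)/2) by (apply Hd2'; auto; rewrite Rabs_minus_sym; lra).
  apply Rabs_def2 in H5. apply Rabs_def2 in H6. destruct H5, H6.
  split. split; lra. split; lra.
Qed.


Lemma abs_le_inv x a : Rabs x <= a -> -a <= x <= a.
Proof. intros H. pose proof (Rle_abs x). pose proof (Rle_abs (-x)). rewrite Rabs_Ropp in H1. lra. Qed.

Ltac unabs H := apply abs_le_inv in H; destruct H.

Lemma key_alg a b y ds dl e1 e2 e3 dt du k :
  0 < a -> 0 < b -> -b <= y <= a -> 0 <= k <= 1/25 ->
  Rabs e1 <= k * Rabs ds -> Rabs e2 <= k * Rabs dl -> dl = ds + e3 ->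
  Rabs e3 <= k * (Rabs ds + Rabs dl) ->
  dt = ds - 2*a*du + e1 -> dt = dl + 2*b*du + e2 -> 0 < dt ->
  dt + 4*y*du >= dt/2.
Proof.
  intros Ha Hb Hy Hk H1 H2 H3 H4 E1 E2 Hdt.
  assert (Eb: b*dt = b*(ds - 2*a*du + e1)) by (f_equal; exact E1).
  assert (Ea: a*dt = a*(dl + 2*b*du + e2)) by (f_equal; exact E2).
  assert (E: (a+b)*dt = b*ds + a*dl + b*e1 + a*e2) by lra.
  assert (W: 2*(a+b)*du = ds - dl + e1 - e2) by lra.
  assert (Hds: 0 < ds).
  { destruct (Rlt_or_le 0 ds) as [P|P]; auto. exfalso.
    rewrite (Rabs_left1 ds) in * by auto.
    assert (dl <= 0).
    { destruct (Rlt_or_le 0 dl) as [Q|Q]; auto.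
      rewrite (Rabs_pos_eq dl) in * by lra.
      unabs H4. exfalso. nra. }
    rewrite (Rabs_left1 dl) in * by auto.
    unabs H1. unabs H2.
    assert (b*e1 <= b*(k*-ds)) by (apply Rmult_le_compat_l; lra).
    assert (a*e2 <= a*(k*-dl)) by (apply Rmult_le_compat_l; lra).
    assert ((a+b)*dt > 0) by nra.
    assert (0 <= b*(1-k)) by nra. assert (b*(1-k)*ds <= 0) by nra.
    assert (0 <= a*(1-k)) by nra. assert (a*(1-k)*dl <= 0) by nra.
    nra. }
  rewrite (Rabs_pos_eq ds) in * by lra.
  assert (Hdl: 0 < dl).
  { destruct (Rlt_or_le 0 dl) as [P|P]; auto. exfalso.
    rewrite (Rabs_left1 dl) in * by auto.
    unabs H4. nra. }
  rewrite (Rabs_pos_eq dl) in * by lra.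
  assert (K1: k*ds <= ds/25) by nra.
  assert (K2: k*dl <= dl/25) by nra.
  assert (K3: k*(ds+dl) <= (ds+dl)/25) by nra.
  unabs H1. unabs H2. unabs H4.
  assert (R1: 24*ds <= 26*dl) by lra.
  assert (R2: 24*dl <= 26*ds) by lra.
  assert (B1: b*e1 >= - b*(ds/25)) by nra.
  assert (B2: a*e2 >= - a*(dl/25)) by nra.
  set (w := 2*(a+b)*du) in *.
  assert (Wb: Rabs w <= 2*(ds+dl)/25).
  { rewrite W. apply Rabs_le. lra. }
  unabs Wb.
  assert (G: (a+b)*dt/2 + 2*y*w >= 0).
  { destruct (Rle_or_lt 0 y) as [P|P].
    - assert (y*w >= - y*(2*(ds+dl)/25)) by nra.
      assert (y*(2*(ds+dl)/25) <= a*(2*(ds+dl)/25)) by nra.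
      assert (a*(8*dl - 4*ds) >= 0) by nra.
      assert (b*ds >= 0) by nra.
      nra.
    - assert (y*w >= y*(2*(ds+dl)/25)) by nra.
      assert (-y*(2*(ds+dl)/25) <= b*(2*(ds+dl)/25)) by nra.
      assert (b*(8*ds - 4*dl) >= 0) by nra.
      assert (a*dl >= 0) by nra.
      nra. }
  assert (FF: (a+b)*(dt + 4*y*du - dt/2) >= 0) by (unfold w in G; nra).
  assert (Hab: 0 < a + b) by lra.
  apply Rle_ge. apply Rge_le in FF.
  destruct (Rle_or_lt (dt/2) (dt + 4*y*du)) as [Z|Z]; auto.
  assert ((a+b)*(dt + 4*y*du - dt/2) < 0); [|lra].
  apply Rmult_pos_neg; lra.
Qed.


Lemma abs_prod_le x y X Y : Rabs x <= X -> Rabs y <= Y -> Rabs (x*y) <= X*Y.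
Proof.
  intros H1 H2. rewrite Rabs_mult. apply Rmult_le_compat; auto; apply Rabs_pos.
Qed.

Lemma slice_alg y t1 t2 U1 U2 s1 s2 l1 l2 G11 G12 P11 P12 G21 G22 P21 P22 ng np lg lp :
  t1 = s1 - 2*(y - G11)*(P11 + U1) -> t2 = s2 - 2*(y - G12)*(P12 + U2) ->
  t1 = l1 - 2*(y - G21)*(P21 + U1) -> t2 = l2 - 2*(y - G22)*(P22 + U2) ->
  l1 - s1 = -2*(G21 - G11)*(P21 + P11) -> l2 - s2 = -2*(G22 - G12)*(P22 + P12) ->
  G12 < y < G22 -> G12 <= 0 -> 0 <= G22 ->
  Rabs G12 <= ng -> Rabs G22 <= ng ->
  Rabs P11 <= np -> Rabs P21 <= np -> Rabs U1 <= np ->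
  Rabs (G12 - G11) <= lg * Rabs (s2 - s1) -> Rabs (P12 - P11) <= lp * Rabs (s2 - s1) ->
  Rabs (G22 - G21) <= lg * Rabs (l2 - l1) -> Rabs (P22 - P21) <= lp * Rabs (l2 - l1) ->
  0 <= ng -> 0 <= np -> 0 <= lg -> 0 <= lp -> 4*(ng*lp + np*lg) <= 1/25 ->
  t1 < t2 ->
  (t2 + 4*y*U2) - (t1 + 4*y*U1) >= (t2 - t1)/2.
Proof.
  intros T1 T2 T1' T2' L1 L2 Hy HG12 HG22 BG12 BG22 BP11 BP21 BU1 LG1 LP1 LG2 LP2 Hng Hnp Hlg Hlp Hk Ht.
  set (a := y - G12). set (b := G22 - y).
  set (ds := s2 - s1). set (dl := l2 - l1). set (du := U2 - U1). set (dt := t2 - t1).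
  set (k := 4*(ng*lp + np*lg)).
  fold ds in LG1; fold ds in LP1; fold dl in LG2; fold dl in LP2.
  set (e1 := dt - ds + 2*a*du). set (e2 := dt - dl - 2*b*du). set (e3 := dl - ds).
  assert (Ha2: a <= 2*ng).
  { unfold a. unabs BG12. unabs BG22. lra. }
  assert (Hb2: b <= 2*ng).
  { unfold b. unabs BG12. unabs BG22. lra. }
  assert (Hsum: Rabs (G22 - G12) <= 2*ng).
  { unabs BG12. unabs BG22. apply Rabs_le. lra. }
  assert (He1: e1 = -2*a*(P12 - P11) + 2*(G12 - G11)*(P11 + U1)).
  { unfold e1, dt, ds, du, a. rewrite T1, T2. ring. }
  assert (He2: e2 = 2*b*(P22 - P21) + 2*(G22 - G21)*(P21 + U1)).
  { unfold e2, dt, dl, du, b. rewrite T1', T2'. ring. }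
  assert (He3: e3 = -2*((G22 - G12)*((P22 - P21) + (P12 - P11)) + ((G22 - G21) - (G12 - G11))*(P21 + P11))).
  { unfold e3, dl, ds. lra. }
  assert (BPU: Rabs (P11 + U1) <= 2*np).
  { pose proof (Rabs_triang P11 U1). lra. }
  assert (BPU2: Rabs (P21 + U1) <= 2*np).
  { pose proof (Rabs_triang P21 U1). lra. }
  assert (BPP: Rabs (P21 + P11) <= 2*np).
  { pose proof (Rabs_triang P21 P11). lra. }
  assert (Hds0 := Rabs_pos ds). assert (Hdl0 := Rabs_pos dl).
  assert (B1: Rabs e1 <= k * Rabs ds).
  { rewrite He1. eapply Rle_trans. apply Rabs_triang.
    assert (Rabs (-2*a*(P12-P11)) <= (2*(2*ng))*(lp*Rabs ds)).
    { apply abs_prod_le; auto. rewrite Rabs_mult. replace (Rabs (-2)) with 2 by (rewrite Rabs_left; lra).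
      rewrite (Rabs_pos_eq a) by (unfold a; lra). lra. }
    assert (Rabs (2*(G12-G11)*(P11+U1)) <= (2*(lg*Rabs ds))*(2*np)).
    { apply abs_prod_le; auto. rewrite Rabs_mult. rewrite (Rabs_pos_eq 2) by lra. lra. }
    unfold k. nra. }
  assert (B2: Rabs e2 <= k * Rabs dl).
  { rewrite He2. eapply Rle_trans. apply Rabs_triang.
    assert (Rabs (2*b*(P22-P21)) <= (2*(2*ng))*(lp*Rabs dl)).
    { apply abs_prod_le; auto. rewrite Rabs_mult. rewrite Rabs_pos_eq by lra.
      rewrite Rabs_pos_eq by (unfold b; lra). lra. }
    assert (Rabs (2*(G22-G21)*(P21+U1)) <= (2*(lg*Rabs dl))*(2*np)).
    { apply abs_prod_le; auto. rewrite Rabs_mult, Rabs_pos_eq by lra. lra. }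
    unfold k. nra. }
  assert (B3: Rabs e3 <= k * (Rabs ds + Rabs dl)).
  { rewrite He3. rewrite Rabs_mult. replace (Rabs (-2)) with 2 by (rewrite Rabs_left; lra).
    assert (Q1: Rabs ((G22 - G12)*((P22 - P21) + (P12 - P11))) <= (2*ng)*(lp*Rabs dl + lp*Rabs ds)).
    { apply abs_prod_le; auto. pose proof (Rabs_triang (P22-P21) (P12-P11)). lra. }
    assert (Q2: Rabs (((G22 - G21) - (G12 - G11))*(P21 + P11)) <= (lg*Rabs dl + lg*Rabs ds)*(2*np)).
    { apply abs_prod_le; auto. pose proof (Rabs_triang (G22-G21) (-(G12-G11))). rewrite Rabs_Ropp in H.
      unfold Rminus at 1. lra. }
    pose proof (Rabs_triang ((G22 - G12)*((P22 - P21) + (P12 - P11))) (((G22 - G21) - (G12 - G11))*(P21 + P11))).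
    unfold k. nra. }
  assert (Hk0: 0 <= k <= 1/25) by (unfold k; split; [nra|lra]).
  assert (KK := key_alg a b y ds dl e1 e2 e3 dt du k).
  assert (dt + 4*y*du >= dt/2).
  { apply KK; try lra; try (unfold a, b; lra); try (unfold e1, e2, e3; ring). unfold dt; lra. }
  replace (t2 + 4*y*U2 - (t1 + 4*y*U1)) with (dt + 4*y*du) by (unfold dt, du; ring). exact H.
Qed.


Lemma lip_cont f K : 0 <= K -> (forall x x', Rabs (f x - f x') <= K * Rabs (x - x')) -> continuity f.
Proof.
  intros HK H x. unfold continuity_pt, continue_in, limit1_in, limit_in.
  intros eps Heps. exists (eps / (K+1)). split. apply Rdiv_lt_0_compat; lra.
  intros x' [_ Hx']. simpl in *. unfold R_dist in *.
  eapply Rle_lt_trans. apply H.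
  assert (K * Rabs (x' - x) <= K * (eps / (K+1))) by (apply Rmult_le_compat_l; lra).
  assert (K * (eps / (K+1)) < eps).
  { apply Rmult_lt_reg_r with (K+1). lra. replace (K * (eps / (K + 1)) * (K + 1)) with (K * eps) by (field; lra). nra. }
  lra.
Qed.

Lemma clamp_lip a b z z' : Rabs (Rmax a (Rmin b z) - Rmax a (Rmin b z')) <= Rabs (z - z').
Proof.
  pose proof (Rle_abs (z - z')). pose proof (Rle_abs (-(z - z'))). rewrite Rabs_Ropp in H0.
  unfold Rmax, Rmin. repeat destruct Rle_dec; apply Rabs_le; lra.
Qed.

Lemma clamp_in a b z : a <= b -> a <= Rmax a (Rmin b z) <= b.
Proof. intros. unfold Rmax, Rmin. repeat destruct Rle_dec; lra. Qed.

Lemma clamp_id a b z : a <= z <= b -> Rmax a (Rmin b z) = z.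
Proof. intros. unfold Rmax, Rmin. repeat destruct Rle_dec; lra. Qed.

Definition FF (u : R -> R -> R) (y t : R) : R := t + 4 * y * u y t.

Lemma F_t_lip (D : R -> R -> Prop) u L y t t' : 0 <= L ->
  (forall y t y' t', D y t -> D y' t' -> Rabs (u y t - u y' t') <= L * dist2 y t y' t') ->
  D y t -> D y t' -> Rabs (FF u y t - FF u y t') <= (1 + 4 * Rabs y * L) * Rabs (t - t').
Proof.
  intros HL Hu H1 H2. unfold FF.
  replace (t + 4*y*u y t - (t' + 4*y*u y t')) with ((t - t') + (4*y)*(u y t - u y t')) by ring.
  eapply Rle_trans. apply Rabs_triang. rewrite Rabs_mult.
  replace (Rabs (4*y)) with (4 * Rabs y) by (rewrite Rabs_mult, (Rabs_pos_eq 4); lra).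
  pose proof (Hu y t y t' H1 H2). pose proof (dist2_le y t y t').
  replace (y - y) with 0 in H0 by ring. rewrite Rabs_R0 in H0.
  assert (Rabs (u y t - u y t') <= L * Rabs (t - t')).
  { eapply Rle_trans. apply H. apply Rmult_le_compat_l; lra. }
  pose proof (Rabs_pos y).
  assert (4 * Rabs y * Rabs (u y t - u y t') <= 4 * Rabs y * (L * Rabs (t - t'))) by (apply Rmult_le_compat_l; lra).
  nra.
Qed.

Lemma F_y_lip (D : R -> R -> Prop) u L y y' t Y B : 0 <= L ->
  (forall y t y' t', D y t -> D y' t' -> Rabs (u y t - u y' t') <= L * dist2 y t y' t') ->
  D y t -> D y' t -> Rabs y <= Y -> Rabs (u y' t) <= B ->
  Rabs (FF u y t - FF u y' t) <= 4 * (Y * L + B) * Rabs (y - y').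
Proof.
  intros HL Hu H1 H2 HY HB. unfold FF.
  replace (t + 4*y*u y t - (t + 4*y'*u y' t)) with (4*(y*(u y t - u y' t) + (y - y')*u y' t)) by ring.
  rewrite Rabs_mult, (Rabs_pos_eq 4) by lra.
  pose proof (Hu y t y' t H1 H2). rewrite dist2_same_t in H.
  pose proof (Rabs_triang (y*(u y t - u y' t)) ((y - y')*u y' t)).
  rewrite !Rabs_mult in H0.
  pose proof (Rabs_pos y). pose proof (Rabs_pos (y - y')). pose proof (Rabs_pos (u y t - u y' t)).
  pose proof (Rabs_pos (u y' t)).
  assert (Rabs y * Rabs (u y t - u y' t) <= Y * (L * Rabs (y - y'))) by (apply Rmult_le_compat; lra).
  assert (Rabs (y - y') * Rabs (u y' t) <= Rabs (y - y') * B) by (apply Rmult_le_compat_l; lra).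
  nra.
Qed.


Definition Tsel (D : R -> R -> Prop) u y tau : R :=
  epsilon (inhabits 0) (fun t => D y t /\ tau = FF u y t).
Definition DrD (D : R -> R -> Prop) u y tau : Prop := exists t, D y t /\ tau = FF u y t.
Definition urD (D : R -> R -> Prop) u y tau : R := u y (Tsel D u y tau).

Lemma Tsel_spec D u y tau : DrD D u y tau -> D y (Tsel D u y tau) /\ tau = FF u y (Tsel D u y tau).
Proof. intros H. unfold Tsel. apply (epsilon_spec (inhabits 0) (fun t => D y t /\ tau = FF u y t)). exact H. Qed.

Lemma inj_bound (D : R -> R -> Prop) u y t1 t2 :
  (forall y t1 t2, D y t1 -> D y t2 -> t1 < t2 -> FF u y t2 - FF u y t1 >= (t2 - t1)/2) ->
  D y t1 -> D y t2 -> Rabs (t1 - t2) <= 2 * Rabs (FF u y t1 - FF u y t2).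
Proof.
  intros Hm H1 H2. destruct (Rtotal_order t1 t2) as [L|[E|G]].
  - pose proof (Hm y t1 t2 H1 H2 L).
    rewrite Rabs_left by lra. rewrite Rabs_left by lra. lra.
  - subst. replace (t2 - t2) with 0 by ring. rewrite Rabs_R0. pose proof (Rabs_pos (FF u y t2 - FF u y t2)). lra.
  - pose proof (Hm y t2 t1 H2 H1 G).
    rewrite Rabs_pos_eq by lra. rewrite Rabs_pos_eq by lra. lra.
Qed.

Lemma local_bounds (D : R -> R -> Prop) u L y0 t0 rho y t : 0 <= L ->
  (forall y t y' t', D y t -> D y' t' -> Rabs (u y t - u y' t') <= L * dist2 y t y' t') ->
  D y0 t0 -> (forall y' t', dist2 y0 t0 y' t' < rho -> D y' t') ->
  dist2 y0 t0 y t < rho ->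
  D y t /\ Rabs y <= Rabs y0 + rho /\ Rabs (u y t) <= Rabs (u y0 t0) + L * rho.
Proof.
  intros HL Hu H0 Hb Hd. assert (Hyt: D y t) by auto. split; auto. split.
  - pose proof (dist2_ge_y y0 t0 y t). rewrite Rabs_minus_sym in H.
    pose proof (Rabs_triang (y - y0) y0). replace (y - y0 + y0) with y in H1 by ring. lra.
  - pose proof (Hu y t y0 t0 Hyt H0). rewrite (dist2_sym) in H.
    pose proof (Rabs_triang (u y t - u y0 t0) (u y0 t0)). replace (u y t - u y0 t0 + u y0 t0) with (u y t) in H1 by ring.
    assert (L * dist2 y0 t0 y t <= L * rho) by (apply Rmult_le_compat_l; lra). lra.
Qed.


Lemma ratio_lt M rho : 0 <= M -> 0 < rho -> M * (rho / (8 * (M + 1))) < rho / 8.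
Proof.
  intros HM Hr. assert (rho / 8 - M * (rho / (8 * (M + 1))) = rho / (8 * (M+1))) by (field; lra).
  assert (0 < rho / (8 * (M+1))) by (apply Rdiv_lt_0_compat; lra). lra.
Qed.

Lemma Dr_open (D : R -> R -> Prop) u L : 0 <= L ->
  (forall y t y' t', D y t -> D y' t' -> Rabs (u y t - u y' t') <= L * dist2 y t y' t') ->
  (forall y t, D y t -> exists rho, 0 < rho /\ forall y' t', dist2 y t y' t' < rho -> D y' t') ->
  (forall y t1 t2, D y t1 -> D y t2 -> t1 < t2 -> FF u y t2 - FF u y t1 >= (t2 - t1)/2) ->
  open_W (DrD D u).
Proof.
  intros HL Hu HDo Hm y0 tau0 [t0 [H0 Htau]].
  destruct (HDo y0 t0 H0) as [rho [Hr Hb]].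
  set (Y := Rabs y0 + rho). set (B := Rabs (u y0 t0) + L * rho). set (M := 4 * (Y * L + B)).
  assert (HY: 0 <= Y) by (unfold Y; pose proof (Rabs_pos y0); lra).
  assert (HB: 0 <= B) by (unfold B; pose proof (Rabs_pos (u y0 t0)); nra).
  assert (HM: 0 <= M) by (unfold M; nra).
  set (tm := t0 - rho/2). set (tp := t0 + rho/2).
  assert (Dm: D y0 tm).
  { apply Hb. eapply Rle_lt_trans. apply dist2_le. unfold tm.
    replace (y0 - y0) with 0 by ring. replace (t0 - (t0 - rho/2)) with (rho/2) by ring.
    rewrite Rabs_R0, Rabs_pos_eq; lra. }
  assert (Dp: D y0 tp).
  { apply Hb. eapply Rle_lt_trans. apply dist2_le. unfold tp.
    replace (y0 - y0) with 0 by ring. replace (t0 - (t0 + rho/2)) with (-(rho/2)) by ring.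
    rewrite Rabs_R0, Rabs_Ropp, Rabs_pos_eq; lra. }
  assert (Fp: FF u y0 tp - FF u y0 t0 >= rho/4).
  { pose proof (Hm y0 t0 tp H0 Dp). unfold tp in *. lra. }
  assert (Fm: FF u y0 t0 - FF u y0 tm >= rho/4).
  { pose proof (Hm y0 tm t0 Dm H0). unfold tm in *. lra. }
  set (del := Rmin (rho/4) (rho/(8*(M+1)))).
  assert (Hdel0: 0 < del) by (unfold del; apply Rmin_glb_lt; [lra| apply Rdiv_lt_0_compat; lra]).
  assert (Hdel1: del <= rho/4) by apply Rmin_l.
  assert (Hdel2: M * del < rho/8).
  { eapply Rle_lt_trans. apply Rmult_le_compat_l. auto. apply Rmin_r. apply ratio_lt; auto. }
  exists (Rmin del (rho/8)). split. apply Rmin_glb_lt; lra.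
  intros y tau Hd.
  assert (Hd1: Rabs (y0 - y) < del).
  { eapply Rle_lt_trans. apply (dist2_ge_y y0 tau0 y tau). eapply Rlt_le_trans. apply Hd. apply Rmin_l. }
  assert (Hd2: Rabs (tau0 - tau) < rho/8).
  { eapply Rle_lt_trans. apply (dist2_ge_t y0 tau0 y tau). eapply Rlt_le_trans. apply Hd. apply Rmin_r. }
  assert (Inb: forall z, tm <= z <= tp -> dist2 y0 t0 y z < rho /\ dist2 y0 t0 y0 z < rho).
  { intros z Hz. split; eapply Rle_lt_trans; try apply dist2_le.
    - assert (Rabs (t0 - z) <= rho/2) by (apply Rabs_le; unfold tm, tp in Hz; lra). lra.
    - replace (y0 - y0) with 0 by ring. rewrite Rabs_R0.
      assert (Rabs (t0 - z) <= rho/2) by (apply Rabs_le; unfold tm, tp in Hz; lra). lra. }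
  assert (Close: forall z, tm <= z <= tp -> D y z /\ Rabs (FF u y z - FF u y0 z) < rho/8).
  { intros z Hz. destruct (Inb z Hz) as [I1 I2].
    destruct (local_bounds D u L y0 t0 rho y z HL Hu H0 Hb I1) as [Dz [Hyb _]].
    destruct (local_bounds D u L y0 t0 rho y0 z HL Hu H0 Hb I2) as [Dz0 [_ Hub]].
    split; auto.
    pose proof (F_y_lip D u L y y0 z Y B HL Hu Dz Dz0 Hyb Hub). fold M in H.
    rewrite Rabs_minus_sym in Hd1.
    assert (M * Rabs (y - y0) <= M * del) by (apply Rmult_le_compat_l; lra). lra. }
  assert (Htmp: tm <= tp) by (unfold tm, tp; lra).
  set (g := fun z => FF u y (Rmax tm (Rmin tp z)) - tau).
  assert (Hgc: continuity g).
  { apply (lip_cont g (1 + 4 * Rabs y * L)). pose proof (Rabs_pos y). nra.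
    intros z z'. unfold g.
    replace (FF u y (Rmax tm (Rmin tp z)) - tau - (FF u y (Rmax tm (Rmin tp z')) - tau))
      with (FF u y (Rmax tm (Rmin tp z)) - FF u y (Rmax tm (Rmin tp z'))) by ring.
    eapply Rle_trans. apply (F_t_lip D u L); auto.
    apply Close. apply clamp_in; auto. apply Close. apply clamp_in; auto.
    apply Rmult_le_compat_l. pose proof (Rabs_pos y). nra. apply clamp_lip. }
  assert (Hgm: g tm < 0).
  { unfold g. rewrite clamp_id by lra. destruct (Close tm) as [_ C]. lra.
    apply Rabs_def2 in C. apply Rabs_def2 in Hd2. destruct C, Hd2. lra. }
  assert (Hgp: 0 < g tp).
  { unfold g. rewrite clamp_id by lra. destruct (Close tp) as [_ C]. lra.
    apply Rabs_def2 in C. apply Rabs_def2 in Hd2. destruct C, Hd2. lra. }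
  assert (Hlt: tm < tp) by (unfold tm, tp; lra).
  destruct (IVT g tm tp Hgc Hlt Hgm Hgp) as [z [Hz Hgz]].
  exists z. split. apply Close; auto. unfold g in Hgz. rewrite clamp_id in Hgz by lra. lra.
Qed.


Lemma Dr_liploc (D : R -> R -> Prop) u L : 0 <= L ->
  (forall y t y' t', D y t -> D y' t' -> Rabs (u y t - u y' t') <= L * dist2 y t y' t') ->
  (forall y t, D y t -> exists rho, 0 < rho /\ forall y' t', dist2 y t y' t' < rho -> D y' t') ->
  (forall y t1 t2, D y t1 -> D y t2 -> t1 < t2 -> FF u y t2 - FF u y t1 >= (t2 - t1)/2) ->
  lip_loc (DrD D u) (urD D u).
Proof.
  intros HL Hu HDo Hm y0 tau0 [t0 [H0 Htau]].
  destruct (HDo y0 t0 H0) as [rho [Hr Hb]].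
  set (Y := Rabs y0 + rho). set (B := Rabs (u y0 t0) + L * rho). set (M := 4 * (Y * L + B)).
  assert (HY: 0 <= Y) by (unfold Y; pose proof (Rabs_pos y0); lra).
  assert (HB: 0 <= B) by (unfold B; pose proof (Rabs_pos (u y0 t0)); nra).
  assert (HM: 0 <= M) by (unfold M; nra).
  set (r := Rmin (rho/4) (rho/(8*(M+1)))).
  assert (Hr0: 0 < r) by (unfold r; apply Rmin_glb_lt; [lra| apply Rdiv_lt_0_compat; lra]).
  assert (Hr1: r <= rho/4) by apply Rmin_l.
  assert (Hr2: 2 * (1 + M) * r <= rho/4).
  { apply Rle_trans with (2 * (1 + M) * (rho/(8*(M+1)))).
    apply Rmult_le_compat_l. lra. apply Rmin_r. right. field. lra. }
  assert (Near: forall y tau, DrD D u y tau -> dist2 y0 tau0 y tau < r ->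
            Rabs (y0 - y) < rho/4 /\ Rabs (t0 - Tsel D u y tau) <= rho/4).
  { intros y tau Hdr Hd. destruct (Tsel_spec D u y tau Hdr) as [Dt Et].
    set (t := Tsel D u y tau) in *.
    assert (Hy: Rabs (y0 - y) < r) by (eapply Rle_lt_trans; [apply (dist2_ge_y y0 tau0 y tau)| auto]).
    assert (Htt: Rabs (tau0 - tau) < r) by (eapply Rle_lt_trans; [apply (dist2_ge_t y0 tau0 y tau)| auto]).
    split. lra.
    assert (I1: dist2 y0 t0 y t0 < rho) by (rewrite dist2_same_t; lra).
    destruct (local_bounds D u L y0 t0 rho y t0 HL Hu H0 Hb I1) as [Dyt0 [_ Hub]].
    pose proof (inj_bound D u y t0 t Hm Dyt0 Dt) as IB.
    pose proof (F_y_lip D u L y0 y t0 Y B HL Hu H0 Dyt0 ltac:(unfold Y; lra) Hub) as FY. fold M in FY.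
    rewrite <- Et in IB. rewrite <- Htau in FY.
    assert (Rabs (FF u y t0 - tau) <= Rabs (tau0 - tau) + Rabs (tau0 - FF u y t0)).
    { replace (FF u y t0 - tau) with ((tau0 - tau) - (tau0 - FF u y t0)) by ring.
      pose proof (Rabs_triang (tau0 - tau) (-(tau0 - FF u y t0))). rewrite Rabs_Ropp in H. exact H. }
    assert (M * Rabs (y0 - y) <= M * r) by (apply Rmult_le_compat_l; lra).
    lra. }
  exists r, (L * (3 + 2 * M)). split; auto.
  intros y tau y' tau' Hdr Hdr' Hd Hd'.
  destruct (Near y tau Hdr Hd) as [N1 N2]. destruct (Near y' tau' Hdr' Hd') as [N1' N2'].
  destruct (Tsel_spec D u y tau Hdr) as [Dt Et]. destruct (Tsel_spec D u y' tau' Hdr') as [Dt' Et'].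
  unfold urD. set (t := Tsel D u y tau) in *. set (t' := Tsel D u y' tau') in *.
  assert (I1: dist2 y0 t0 y t' < rho).
  { eapply Rle_lt_trans. apply dist2_le. lra. }
  assert (I2: dist2 y0 t0 y' t' < rho).
  { eapply Rle_lt_trans. apply dist2_le. lra. }
  destruct (local_bounds D u L y0 t0 rho y t' HL Hu H0 Hb I1) as [Dyt' [_ Hub]].
  destruct (local_bounds D u L y0 t0 rho y' t' HL Hu H0 Hb I2) as [_ [Hyb' _]].
  pose proof (inj_bound D u y t t' Hm Dt Dyt') as IB.
  pose proof (F_y_lip D u L y' y t' Y B HL Hu Dt' Dyt' Hyb' Hub) as FY. fold M in FY.
  rewrite <- Et in IB. rewrite <- Et' in FY.
  assert (Rabs (tau - FF u y t') <= Rabs (tau - tau') + Rabs (tau' - FF u y t')).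
  { replace (tau - FF u y t') with ((tau - tau') + (tau' - FF u y t')) by ring. apply Rabs_triang. }
  assert (Dy: Rabs (y' - y) <= dist2 y tau y' tau') by (rewrite Rabs_minus_sym; apply dist2_ge_y).
  assert (Dta: Rabs (tau - tau') <= dist2 y tau y' tau') by apply dist2_ge_t.
  assert (Tt: Rabs (t - t') <= 2 * dist2 y tau y' tau' + 2 * M * dist2 y tau y' tau').
  { assert (M * Rabs (y' - y) <= M * dist2 y tau y' tau') by (apply Rmult_le_compat_l; lra). lra. }
  eapply Rle_trans. apply Hu; auto.
  eapply Rle_trans. apply Rmult_le_compat_l. auto. apply dist2_le.
  rewrite Rmult_assoc. apply Rmult_le_compat_l. auto.
  rewrite Rabs_minus_sym in Dy. lra.
Qed.


Lemma decomp_alg t y U s l h G1 G2 P1 P2 :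
  U = (1-h)*P1 + h*P2 -> y = (1-h)*G1 + h*G2 ->
  t + 2*y*U = (1-h)*(s + 2*G1*P1) + h*(l + 2*G2*P2) ->
  l + 2*G2*P2 - (s + 2*G1*P1) = 2*G1*(P2 - P1) - 2*P1*(G2 - G1) ->
  t = s - 2*(y - G1)*(P1 + U) /\ t = l - 2*(y - G2)*(P2 + U) /\ l - s = -2*(G2 - G1)*(P2 + P1).
Proof.
  intros EU Ey Et El. subst U y.
  assert (El': l = s + 2*G1*(P2 - P1) - 2*P1*(G2 - G1) - 2*G2*P2 + 2*G1*P1) by lra. subst l.
  assert (Et': t = (1-h)*(s + 2*G1*P1) + h*((s + 2*G1*(P2 - P1) - 2*P1*(G2 - G1) - 2*G2*P2 + 2*G1*P1) + 2*G2*P2)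
     - 2*((1-h)*G1 + h*G2)*((1-h)*P1 + h*P2)) by lra.
  subst t. split; [|split]; ring.
Qed.

Lemma decomp tb g1 g2 phi u y t :
  (forall q, S_left (Dom tb g1 g2) u q <-> R_phi tb g1 g2 phi q) ->
  Dom tb g1 g2 y t ->
  exists s l h, inI tb s /\ inIbar tb l /\ 0 < h < 1 /\
    u y t = (1-h)*phi (g1 s) s + h*phi (g2 l) l /\ y = (1-h)*g1 s + h*g2 l /\
    t = s - 2*(y - g1 s)*(phi (g1 s) s + u y t) /\
    t = l - 2*(y - g2 l)*(phi (g2 l) l + u y t) /\
    l - s = -2*(g2 l - g1 s)*(phi (g2 l) l + phi (g1 s) s).
Proof.
  intros Hrep HD.
  assert (HS: S_left (Dom tb g1 g2) u (u y t, y, t + 2*y*u y t)) by (exists y, t; auto).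
  apply Hrep in HS. destruct HS as (h & s & l & Hh & Hs & [Hl Hlam] & Hq).
  unfold comb3, p_i in Hq. injection Hq as E1 E2 E3.
  unfold in_Hp, sub3, p_i in Hlam.
  exists s, l, h. do 5 (split; auto).
  apply decomp_alg with h; auto.
Qed.


Lemma c0_small : (sqrt 721 - 25) / 48 < 1/25.
Proof.
  pose proof (sqrt_sqrt 721 ltac:(lra)). pose proof (sqrt_pos 721).
  assert (sqrt 721 < 26.92) by nra. lra.
Qed.

Theorem proposition1p2 (tb : R) (g1 g2 : R -> R) (phi u : R -> R -> R) :
  0 < tb ->
  lip_on_I tb g1 -> lip_on_I tb g2 ->
  cont_on_Ibar tb g1 -> cont_on_Ibar tb g2 ->
  (forall s, inI tb s -> g1 s < 0 < g2 s) ->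
  g1 0 = 0 -> g1 tb = 0 -> g2 0 = 0 -> g2 tb = 0 ->
  convex_on_Ibar tb g1 -> concave_on_Ibar tb g2 ->
  cont_on_boundary (Dom tb g1 g2) phi ->
  lip_on_I tb (fun s => phi (g1 s) s) -> lip_on_I tb (fun s => phi (g2 s) s) ->
  zeta_lt tb g1 g2 phi ((sqrt 721 - 25) / 48) ->
  lip_on (Dom tb g1 g2) u ->
  boundary_values (Dom tb g1 g2) u phi ->
  (forall q, S_left (Dom tb g1 g2) u q <-> R_phi tb g1 g2 phi q) ->
  exists (Dr : R -> R -> Prop) (ur : R -> R -> R),
    open_W Dr /\ lip_loc Dr ur /\
    (forall q, S_left (Dom tb g1 g2) u q <-> S_right Dr ur q).
Proof.
  intros Htb _ _ Hc1 Hc2 Hsign _ _ Hg20 Hg2tb _ _ Hcb _ _ Hz Hlip _ Hrep.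
  destruct Hz as (ng1 & ng2 & lg1 & lg2 & np1 & np2 & lp1 & lp2 & Sg1 & Sg2 & Lg1 & Lg2 & Sp1 & Sp2 & Lp1 & Lp2 & Hzeta).
  set (ng := Rmax ng1 ng2). set (lg := Rmax lg1 lg2). set (np := Rmax np1 np2). set (lp := Rmax lp1 lp2).
  pose proof (sup_nonneg _ _ _ Htb Sg1). pose proof (sup_nonneg _ _ _ Htb Sg2).
  pose proof (sup_nonneg _ _ _ Htb Sp1). pose proof (sup_nonneg _ _ _ Htb Sp2).
  pose proof (lip_nonneg _ _ _ Htb Lg1). pose proof (lip_nonneg _ _ _ Htb Lg2).
  pose proof (lip_nonneg _ _ _ Htb Lp1). pose proof (lip_nonneg _ _ _ Htb Lp2).
  assert (Hng: 0 <= ng) by (unfold ng; eapply Rle_trans; [|apply Rmax_l]; auto).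
  assert (Hlg: 0 <= lg) by (unfold lg; eapply Rle_trans; [|apply Rmax_l]; auto).
  assert (Hnp: 0 <= np) by (unfold np; eapply Rle_trans; [|apply Rmax_l]; auto).
  assert (Hlp : 0 <= lp) by (unfold lp; eapply Rle_trans; [|apply Rmax_l]; auto).
  assert (Hk: 4*(ng*lp + np*lg) <= 1/25).
  { pose proof c0_small. fold ng lg np lp in Hzeta. nra. }
  assert (BG1: forall s, inI tb s -> Rabs (g1 s) <= ng).
  { intros s Hs. eapply Rle_trans. apply (sup_bound tb g1 ng1 s Sg1 Hs). apply Rmax_l. }
  assert (BG2: forall s, inIbar tb s -> Rabs (g2 s) <= ng).
  { intros s Hs. apply (ext_sup tb g2 ng s Htb Hc2); auto. intros s' Hs'.
    eapply Rle_trans. apply (sup_bound tb g2 ng2 s' Sg2 Hs'). apply Rmax_r. }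
  assert (Hcp2 := phi2_cont tb g1 g2 phi Htb Hc2 Hsign Hcb).
  assert (BP1: forall s, inI tb s -> Rabs (phi (g1 s) s) <= np).
  { intros s Hs. eapply Rle_trans. apply (sup_bound tb (fun s => phi (g1 s) s) np1 s Sp1 Hs). apply Rmax_l. }
  assert (BP2: forall s, inIbar tb s -> Rabs (phi (g2 s) s) <= np).
  { intros s Hs. apply (ext_sup tb (fun s => phi (g2 s) s) np s Htb Hcp2); auto. intros s' Hs'.
    eapply Rle_trans. apply (sup_bound tb (fun s => phi (g2 s) s) np2 s' Sp2 Hs'). apply Rmax_r. }
  assert (LG1: forall s s', inI tb s -> inI tb s' -> Rabs (g1 s - g1 s') <= lg * Rabs (s - s')).
  { intros s s' Hs Hs'. eapply Rle_trans. apply (lip_bound tb g1 lg1 s s' Lg1 Hs Hs').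
    apply Rmult_le_compat_r. apply Rabs_pos. apply Rmax_l. }
  assert (LP1: forall s s', inI tb s -> inI tb s' -> Rabs (phi (g1 s) s - phi (g1 s') s') <= lp * Rabs (s - s')).
  { intros s s' Hs Hs'. eapply Rle_trans. apply (lip_bound tb (fun s => phi (g1 s) s) lp1 s s' Lp1 Hs Hs').
    apply Rmult_le_compat_r. apply Rabs_pos. apply Rmax_l. }
  assert (LG2: forall s s', inIbar tb s -> inIbar tb s' -> Rabs (g2 s - g2 s') <= lg * Rabs (s - s')).
  { intros s s' Hs Hs'. apply (ext_lip tb g2 lg s s' Htb Hc2); auto. intros a b Ha Hb.
    eapply Rle_trans. apply (lip_bound tb g2 lg2 a b Lg2 Ha Hb).
    apply Rmult_le_compat_r. apply Rabs_pos. apply Rmax_r. }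
  assert (LP2: forall s s', inIbar tb s -> inIbar tb s' -> Rabs (phi (g2 s) s - phi (g2 s') s') <= lp * Rabs (s - s')).
  { intros s s' Hs Hs'. apply (ext_lip tb (fun s => phi (g2 s) s) lp s s' Htb Hcp2); auto. intros a b Ha Hb.
    eapply Rle_trans. apply (lip_bound tb (fun s => phi (g2 s) s) lp2 a b Lp2 Ha Hb).
    apply Rmult_le_compat_r. apply Rabs_pos. apply Rmax_r. }
  assert (G2pos: forall s, inIbar tb s -> 0 <= g2 s).
  { intros s [Hs1 Hs2]. destruct Hs1 as [Hs1|Hs1]; [destruct Hs2 as [Hs2|Hs2]|].
    - left. apply Hsign. split; auto.
    - subst. lra.
    - subst. lra. }
  set (D := Dom tb g1 g2).
  assert (Hm: forall y t1 t2, D y t1 -> D y t2 -> t1 < t2 -> FF u y t2 - FF u y t1 >= (t2 - t1)/2).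
  { intros y t1 t2 Hd1 Hd2 Hlt.
    destruct (decomp tb g1 g2 phi u y t1 Hrep Hd1) as (s1 & l1 & h1 & Hs1 & Hl1 & Hh1 & EU1 & Ey1 & T1 & T1' & L1).
    destruct (decomp tb g1 g2 phi u y t2 Hrep Hd2) as (s2 & l2 & h2 & Hs2 & Hl2 & Hh2 & EU2 & Ey2 & T2 & T2' & L2).
    unfold FF.
    destruct (Hsign s2 Hs2) as [Gs2 _]. pose proof (G2pos l2 Hl2) as Gl2.
    assert (Hy2: g1 s2 < y < g2 l2).
    { rewrite Ey2. split; nra. }
    assert (BU1: Rabs (u y t1) <= np).
    { rewrite EU1. eapply Rle_trans. apply Rabs_triang. rewrite !Rabs_mult.
      rewrite (Rabs_pos_eq (1-h1)) by lra. rewrite (Rabs_pos_eq h1) by lra.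
      pose proof (BP1 s1 Hs1). pose proof (BP2 l1 Hl1). nra. }
    apply (slice_alg y t1 t2 (u y t1) (u y t2) s1 s2 l1 l2 (g1 s1) (g1 s2) (phi (g1 s1) s1) (phi (g1 s2) s2)
             (g2 l1) (g2 l2) (phi (g2 l1) l1) (phi (g2 l2) l2) ng np lg lp); auto; try lra. }
  destruct Hlip as [L0 HL0].
  set (L := Rmax L0 0).
  assert (HL: 0 <= L) by apply Rmax_r.
  assert (Hu: forall y t y' t', D y t -> D y' t' -> Rabs (u y t - u y' t') <= L * dist2 y t y' t').
  { intros. eapply Rle_trans. apply HL0; auto. apply Rmult_le_compat_r. apply dist2_nonneg. apply Rmax_l. }
  assert (HDo: forall y t, D y t -> exists rho, 0 < rho /\ forall y' t', dist2 y t y' t' < rho -> D y' t').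
  { intros. apply Dom_open; auto. }
  exists (DrD D u), (urD D u). split; [|split].
  - apply (Dr_open D u L); auto.
  - apply (Dr_liploc D u L); auto.
  - intros q. split.
    + intros [y [t [HD Hq]]]. exists y, (FF u y t).
      assert (Hdr: DrD D u y (FF u y t)) by (exists t; auto).
      split; auto.
      destruct (Tsel_spec D u y (FF u y t) Hdr) as [Dt Et].
      pose proof (inj_bound D u y t (Tsel D u y (FF u y t)) Hm HD Dt) as IB.
      rewrite <- Et in IB. replace (FF u y t - FF u y t) with 0 in IB by ring.
      rewrite Rabs_R0 in IB.
      assert (Eq: Tsel D u y (FF u y t) = t).
      { pose proof (Rabs_pos (t - Tsel D u y (FF u y t))).
        assert (KK: Rabs (t - Tsel D u y (FF u y t)) = 0) by lra.
        pose proof (Rle_abs (t - Tsel D u y (FF u y t))).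
        pose proof (Rle_abs (-(t - Tsel D u y (FF u y t)))). rewrite Rabs_Ropp in *. lra. }
      unfold urD. rewrite Eq. rewrite Hq. unfold FF.
      replace (t + 4 * y * u y t - 2 * y * u y t) with (t + 2 * y * u y t) by ring. reflexivity.
    + intros [y [tau [Hdr Hq]]].
      destruct (Tsel_spec D u y tau Hdr) as [Dt Et].
      exists y, (Tsel D u y tau). split; auto.
      rewrite Hq. unfold urD. set (T := Tsel D u y tau) in *.
      assert (EE: tau - 2*y*u y T = T + 2*y*u y T) by (rewrite Et; unfold FF; ring).
      rewrite EE. reflexivity.
Qed.
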